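(* Let $(\Omega,\mathcal{F})$ be a measurable space, $\mathcal{P}$ a nonempty set of probability measures on it, $\hat{\mathbb{E}}[Z]=\sup_{P\in\mathcal{P}}E_P[Z]$, and let $X,Y$ be random variables with $\hat{\mathbb{E}}[X^2]+\hat{\mathbb{E}}[Y^2]<\infty$. Put $U=\frac{X+Y}{2}$ and $V=\frac{X-Y}{2}$. Then (i) $\overline{C}(X,Y)=\max_{\beta\in\mathbb{R}}\min_{\alpha\in\mathbb{R}}\hat{\mathbb{E}}[(U-\alpha)^2-(V-\beta)^2]$, and there exist $\alpha^*\in M_U$, $\beta^*\in M_V$ such that $\overline{C}(X,Y)=\hat{\mathbb{E}}[(U-\alpha^* )^2-(V-\beta^* )^2]$; (ii) $\underline{C}(X,Y)=\min_{\alpha\in\mathbb{R}}\max_{\beta\in\mathbb{R}}\left(-\hat{\mathbb{E}}[-(U-\alpha)^2+(V-\beta)^2]\right)$, and there exist $\alpha^*\in M_U$, $\beta^*\in M_V$ such that $\underline{C}(X,Y)=-\hat{\mathbb{E}}[-(U-\alpha^* )^2+(V-\beta^* )^2]$.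
   Context: For a random variable $W$ with $\hat{\mathbb{E}}[W^2]<\infty$: $\overline{\mu}_W=\hat{\mathbb{E}}[W]$, $\underline{\mu}_W=-\hat{\mathbb{E}}[-W]$, $M_W=[\underline{\mu}_W,\overline{\mu}_W]$. Upper covariance $\overline{C}(X,Y)=\max_{\mu_2\in M_Y}\min_{\mu_1\in M_X}\hat{\mathbb{E}}[(X-\mu_1)(Y-\mu_2)]$; lower covariance $\underline{C}(X,Y)=\min_{\mu_2\in M_Y}\max_{\mu_1\in M_X}\left(-\hat{\mathbb{E}}[-(X-\mu_1)(Y-\mu_2)]\right)$. *)

(* Defs.v *)
From HB Require Import structures.
From mathcomp Require Import all_boot all_order all_algebra.
From mathcomp Require Import all_classical all_reals all_analysis.
Set Implicit Arguments. Unset Strict Implicit. Unset Printing Implicit Defensive.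
Import Order.TTheory GRing.Theory Num.Theory.
Local Open Scope classical_set_scope.
Local Open Scope ring_scope.

Definition sublinE d (T : measurableType d) (R : realType)
  (Ps : set (probability T R)) (Z : T -> R) : \bar R :=
  ereal_sup [set 'E_P[Z]%E | P in Ps].

(* upper mean  \overline{mu}_W = \hat E[W]  (real; finite under the standing hypotheses) *)
Definition upmean d (T : measurableType d) (R : realType)
  (Ps : set (probability T R)) (W : T -> R) : R :=
  fine (sublinE Ps W).

Definition lowmean d (T : measurableType d) (R : realType)
  (Ps : set (probability T R)) (W : T -> R) : R :=
  - fine (sublinE Ps (fun w => - W w)).

Definition meanset d (T : measurableType d) (R : realType)
  (Ps : set (probability T R)) (W : T -> R) : set R :=
  `[lowmean Ps W, upmean Ps W].

Definition upcov d (T : measurableType d) (R : realType)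
  (Ps : set (probability T R)) (X Y : T -> R) : \bar R :=
  ereal_sup [set ereal_inf [set sublinE Ps (fun w => (X w - m1) * (Y w - m2))
                           | m1 in meanset Ps X]
            | m2 in meanset Ps Y].

Definition lowcov d (T : measurableType d) (R : realType)
  (Ps : set (probability T R)) (X Y : T -> R) : \bar R :=
  ereal_inf [set ereal_sup [set (- sublinE Ps (fun w => (- ((X w - m1) * (Y w - m2)))%R))%E
                           | m1 in meanset Ps X]
            | m2 in meanset Ps Y].

(* Main.v *)
Require Import Defs.
From HB Require Import structures.
From mathcomp Require Import all_boot all_order all_algebra.
From mathcomp Require Import all_classical all_reals all_analysis.
From mathcomp Require Import ring lra.
From mathcomp Require Import measurable_realfun.
Import Order.TTheory GRing.Theory Num.Theory.
Import numFieldNormedType.Exports.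
Local Open Scope classical_set_scope.
Local Open Scope ring_scope.

Definition rsup {R : realType} {I : Type} (J : set I) (f : I -> R) : R :=
  fine (ereal_sup [set (f i)%:E | i in J]).

Lemma rsupE {R : realType} {I : Type} {J : set I} {f : I -> R} {M : R} :
  J !=set0 -> (forall i, J i -> f i <= M) ->
  ereal_sup [set (f i)%:E | i in J] = (rsup J f)%:E.
Proof.
move=> [i0 Ji0] hM; rewrite /rsup fineK // fin_numE; apply/andP; split.
  rewrite -ltNye; apply: (lt_le_trans (ltNyr (f i0))).
  by apply: ereal_sup_ubound; exists i0.
rewrite -ltey; apply: (le_lt_trans (y := M%:E)); last exact: ltry.
by apply: ge_ereal_sup => _ [i Ji <-]; rewrite lee_fin hM.
Qed.

Lemma rsup_ub {R : realType} {I : Type} {J : set I} {f : I -> R} {M : R} :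
  J !=set0 -> (forall i, J i -> f i <= M) -> forall i, J i -> f i <= rsup J f.
Proof.
move=> J0 hM i Ji; rewrite -lee_fin -(rsupE J0 hM).
by apply: ereal_sup_ubound; exists i.
Qed.

Lemma rsup_le {R : realType} {I : Type} {J : set I} {f : I -> R} {M : R} :
  J !=set0 -> (forall i, J i -> f i <= M) -> rsup J f <= M.
Proof.
move=> J0 hM; rewrite -lee_fin -(rsupE J0 hM).
by apply: ge_ereal_sup => _ [i Ji <-]; rewrite lee_fin hM.
Qed.

Lemma conv_in {R : realType} {lo hi p q l : R} :
  lo <= p <= hi -> lo <= q <= hi -> 0 <= l <= 1 -> lo <= l * p + (1 - l) * q <= hi.
Proof.
move=> /andP[h1 h2] /andP[h3 h4] /andP[h5 h6]; apply/andP; split; nra.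
Qed.
Lemma helly (R : realType) (I : Type) (J : set I) (lo hi : I -> R) (L H : R) :
  L <= H -> (forall i, J i -> lo i <= H) -> (forall i, J i -> L <= hi i) ->
  (forall i j, J i -> J j -> lo i <= hi j) ->
  exists a, L <= a <= H /\ forall i, J i -> lo i <= a <= hi i.
Proof.
move=> LH loH Lhi lohi.
pose E := [set L] `|` [set lo i | i in J].
have E0 : E !=set0 by exists L; left.
have Eub : ubound E H by move=> r [->|[i Ji <-]] //; exact: loH.
have hE : has_ubound E by exists H.
exists (sup E); split.
  apply/andP; split; first by apply: ub_le_sup => //; left.
  exact: ge_sup.
move=> i Ji; apply/andP; split.
  by apply: ub_le_sup => //; right; exists i.
apply: ge_sup => // r [->|[k Jk <-]]; [exact: Lhi| exact: lohi].
Qed.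
Lemma cont_loc (R : realType) (f : R -> R) (C : R) (b0 : R) :
  (forall x, `|f x - f b0| <= `|x - b0| * (C + `|x|)) -> {for b0, continuous f}.
Proof.
move=> hf.
apply/cvgrPdist_lt => e e0.
have hC : 0 < `|C| + `|b0| + 2 by rewrite ltr_wpDl // addr_ge0.
pose d := Num.min 1 (e / (`|C| + `|b0| + 2)).
have d0 : 0 < d by rewrite lt_min ltr01 divr_gt0.
near=> x.
have hx : `|x - b0| < d.
  near: x; apply/nbhs_normP; exists d => // y /=.
  by rewrite distrC.
rewrite distrC (le_lt_trans (hf x)) //.
have x1 : `|x| <= `|b0| + 1.
  have : `|x - b0| < 1 by apply: (lt_le_trans hx); rewrite ge_min lexx.
  move=> h; rewrite -(subrK b0 x) (le_trans (ler_normD _ _)) // addrC lerD2l ltW //.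
have : `|x - b0| < e / (`|C| + `|b0| + 2) by apply: (lt_le_trans hx); rewrite ge_min lexx orbT.
move=> h2.
apply: (le_lt_trans (y := `|x - b0| * (`|C| + `|b0| + 2))).
  apply: ler_wpM2l => //; rewrite -addrA lerD ?ler_norm //.
  by apply: (le_trans x1); rewrite lerD2l ler1n.
by rewrite -ltr_pdivlMr.
Unshelve. all: by end_near.
Qed.

Definition hh {R : realType} {I : Type} (c x y : I -> R) i (m1 m2 : R) : R :=
  c i - m2 * x i - m1 * y i + m1 * m2.

Definition Hs {R : realType} {I : Type} (J : set I) (c x y : I -> R) (m1 m2 : R) : \bar R :=
  ereal_sup [set (hh c x y i m1 m2)%:E | i in J].

Definition hs {R : realType} {I : Type} (J : set I) (c x y : I -> R) (m1 m2 : R) : R :=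
  rsup J (fun i => hh c x y i m1 m2).

Definition covm {R : realType} {I : Type} (c x y : I -> R) i j (l : R) : R :=
  (l * c i + (1 - l) * c j) - (l * x i + (1 - l) * x j) * (l * y i + (1 - l) * y j).

Definition bnd {R : realType} {I : Type} (J : set I) (c x y : I -> R) (B : R) :=
  forall i, J i -> `|c i| <= B /\ `|x i| <= B /\ `|y i| <= B.

Lemma absB_le {R : realType} (a : R) {b B : R} : `|b| <= B -> - (a * b) <= `|a| * B.
Proof.
move=> hb; apply: (le_trans (y := `|a * b|)); first by rewrite -normrN ler_norm.
by rewrite normrM ler_wpM2l.
Qed.

Lemma abs_le {R : realType} {b B : R} : `|b| <= B -> -B <= b <= B.
Proof. by move=> h; rewrite -ler_norml. Qed.

Lemma hh_bnd {R : realType} {I : Type} {J : set I} {c x y : I -> R} {B : R} m1 m2 :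
  bnd J c x y B -> forall i, J i -> hh c x y i m1 m2 <= B + `|m2| * B + `|m1| * B + m1 * m2.
Proof.
move=> hB i Ji; have [hc [hx hy]] := hB i Ji; rewrite /hh.
have h1 := absB_le m2 hx; have h2 := absB_le m1 hy.
have h3 : c i <= B by apply: le_trans (ler_norm _) hc.
lra.
Qed.

Lemma HsE {R : realType} {I : Type} {J : set I} {c x y : I -> R} {B : R} m1 m2 :
  J !=set0 -> bnd J c x y B -> Hs J c x y m1 m2 = (hs J c x y m1 m2)%:E.
Proof. by move=> J0 hB; rewrite /Hs (rsupE J0 (hh_bnd m1 m2 hB)). Qed.

Lemma hs_ub {R : realType} {I : Type} {J : set I} {c x y : I -> R} {B : R} m1 m2 :
  J !=set0 -> bnd J c x y B -> forall i, J i -> hh c x y i m1 m2 <= hs J c x y m1 m2.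
Proof. by move=> J0 hB; apply: (rsup_ub J0 (hh_bnd m1 m2 hB)). Qed.

Lemma hs_le {R : realType} {I : Type} {J : set I} {c x y : I -> R} m1 m2 S :
  J !=set0 -> (forall i, J i -> hh c x y i m1 m2 <= S) -> hs J c x y m1 m2 <= S.
Proof. by move=> J0 hS; apply: rsup_le J0 hS. Qed.

Lemma mean_in {R : realType} {I : Type} {J : set I} {f : I -> R} {B : R} :
  J !=set0 -> (forall i, J i -> `|f i| <= B) ->
  forall i, J i -> - rsup J (fun k => - f k) <= f i <= rsup J f.
Proof.
move=> J0 hB i Ji.
have hu : forall k, J k -> f k <= B by move=> k Jk; apply: le_trans (ler_norm _) (hB k Jk).
have hl : forall k, J k -> - f k <= B.
  by move=> k Jk; apply: le_trans (hB k Jk); rewrite -normrN ler_norm.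
rewrite lerNl (rsup_ub J0 hl) //= (rsup_ub J0 hu) //.
Qed.

Lemma identA {R : realType} {I : Type} (c x y : I -> R) i j l m1 m2 :
  l * hh c x y i m1 m2 + (1 - l) * hh c x y j m1 m2 =
  covm c x y i j l + ((l * x i + (1 - l) * x j) - m1) * ((l * y i + (1 - l) * y j) - m2).
Proof. rewrite /hh /covm; ring. Qed.

Lemma cov_self {R : realType} {I : Type} (c x y : I -> R) i :
  covm c x y i i 1 = c i - x i * y i.
Proof. rewrite /covm; ring. Qed.

Definition rhi {R : realType} {I : Type} (J : set I) (f : I -> R) : R := rsup J f.
Definition rlo {R : realType} {I : Type} (J : set I) (f : I -> R) : R := - rsup J (fun k => - f k).

Definition LHSv {R : realType} {I : Type} (J : set I) (c x y : I -> R) : \bar R :=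
  ereal_sup [set ereal_inf [set Hs J c x y m1 m2 | m1 in `[rlo J x, rhi J x]]
            | m2 in `[rlo J y, rhi J y]].

Definition RHSv {R : realType} {I : Type} (J : set I) (c x y : I -> R) : \bar R :=
  ereal_sup [set ereal_inf [set Hs J c x y (a + b) (a - b) | a in [set: R]]
            | b in [set: R]].

Lemma L1 {R : realType} {I : Type} {J : set I} {c x y : I -> R} {B : R} :
  J !=set0 -> bnd J c x y B ->
  forall i j l, J i -> J j -> 0 <= l <= 1 -> ((covm c x y i j l)%:E <= LHSv J c x y)%E.
Proof.
move=> J0 hB i j l Ji Jj hl.
have hyB : forall k, J k -> `|y k| <= B by move=> k Jk; have [_ [_ ->]] := hB k Jk.
set ym := l * y i + (1 - l) * y j.
have hym : rlo J y <= ym <= rhi J y.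
  by apply: conv_in => //; rewrite /rlo /rhi; apply: (mean_in J0 hyB).
apply: le_ereal_sup_tmp.
exists (ereal_inf [set Hs J c x y m1 ym | m1 in `[rlo J x, rhi J x]]).
  by exists ym => //=; rewrite in_itv.
apply/ereal_infP => _ [m1 _ <-]; rewrite (HsE _ _ J0 hB) lee_fin.
have h := identA c x y i j l m1 ym; rewrite subrr mulr0 addr0 in h.
rewrite -h.
have hi := hs_ub m1 ym J0 hB i Ji; have hj := hs_ub m1 ym J0 hB j Jj.
move: hl => /andP[l0 l1]; nra.
Qed.

Lemma L2 {R : realType} {I : Type} {J : set I} {c x y : I -> R} {B : R} :
  J !=set0 -> bnd J c x y B ->
  forall i j l, J i -> J j -> 0 <= l <= 1 -> ((covm c x y i j l)%:E <= RHSv J c x y)%E.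
Proof.
move=> J0 hB i j l Ji Jj hl.
set xm := l * x i + (1 - l) * x j.
set ym := l * y i + (1 - l) * y j.
set b := (xm - ym) / 2.
apply: le_ereal_sup_tmp.
exists (ereal_inf [set Hs J c x y (a + b) (a - b) | a in [set: R]]); first by exists b.
apply/ereal_infP => _ [a _ <-]; rewrite (HsE _ _ J0 hB) lee_fin.
have h := identA c x y i j l (a + b) (a - b).
have e : (xm - (a + b)) * (ym - (a - b)) = ((xm + ym) / 2 - a) ^+ 2.
  by rewrite /b; field.
rewrite -/xm -/ym e in h.
have hi := hs_ub (a + b) (a - b) J0 hB i Ji; have hj := hs_ub (a + b) (a - b) J0 hB j Jj.
have sq : 0 <= ((xm + ym) / 2 - a) ^+ 2 by apply: sqr_ge0.
move: hl => /andP[l0 l1]; nra.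
Qed.

Lemma L3 {R : realType} {I : Type} {J : set I} {c x y : I -> R} {B : R} :
  J !=set0 -> bnd J c x y B -> forall S,
  (forall i j l, J i -> J j -> 0 <= l <= 1 -> covm c x y i j l <= S) ->
  (LHSv J c x y <= S%:E)%E.
Proof.
move=> J0 hB S hS.
apply: ge_ereal_sup => _ [m2 hm2 <-].
have hxB : forall k, J k -> `|x k| <= B by move=> k Jk; have [_ [-> _]] := hB k Jk.
have hxin : forall k, J k -> rlo J x <= x k <= rhi J x.
  by move=> k Jk; rewrite /rlo /rhi; apply: (mean_in J0 hxB).
have LH : rlo J x <= rhi J x.
  by case: J0 => k Jk; have /andP[h1 h2] := hxin k Jk; apply: le_trans h1 h2.
pose d k := y k - m2.
pose e k := S - (c k - x k * y k).
pose t k := e k / d k.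
have he : forall k, J k -> 0 <= e k.
  by move=> k Jk; have := hS k k 1 Jk Jk; rewrite cov_self ler01 lexx /e subr_ge0; apply.
have et : forall k, d k != 0 -> e k = t k * d k by move=> k dk; rewrite /t divfK.
have hhE : forall k m, hh c x y k m m2 = S - e k + (x k - m) * d k.
  by move=> k m; rewrite /hh /e /d; ring.
pose lo k := if 0 < d k then x k - t k else rlo J x.
pose hi k := if d k < 0 then x k - t k else rhi J x.
have [a [ha hlohi]] : exists a, rlo J x <= a <= rhi J x /\
    forall k, J k -> lo k <= a <= hi k.
  apply: helly => //.
  - move=> k Jk; rewrite /lo; case: ifP => // dk.
    have := et k (lt0r_neq0 dk); have := he k Jk; have /andP[_ h2] := hxin k Jk.
    move=> h3 h4; nra.
  - move=> k Jk; rewrite /hi; case: ifP => // dk.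
    have := et k (ltr0_neq0 dk); have := he k Jk; have /andP[h2 _] := hxin k Jk.
    move=> h3 h4; nra.
  - move=> i j Ji Jj; rewrite /lo /hi; case: ifP => di; case: ifP => dj.
    + rewrite leNgt; apply/negP => hlt.
      pose m := ((x i - t i) + (x j - t j)) / 2.
      have hmi : 0 < x i - t i - m by rewrite /m; lra.
      have hmj : x j - t j - m < 0 by rewrite /m; lra.
      pose l := d j / (d j - d i).
      have hld : l * (d j - d i) = d j by rewrite /l divfK // subr_eq0 lt_eqF // (lt_trans dj di).
      have l0 : 0 < l by nra.
      have l1 : l <= 1 by nra.
      have hc := hS i j l Ji Jj ((introT andP (conj (ltW l0) l1))).
      have h := identA c x y i j l m m2.
      have e0 : (l * y i + (1 - l) * y j) - m2 = 0.
        have -> : (l * y i + (1 - l) * y j) - m2 = l * d i + (1 - l) * d j by rewrite /d; ring.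
        nra.
      rewrite e0 mulr0 addr0 !hhE in h.
      have eti := et i (lt0r_neq0 di); have etj := et j (ltr0_neq0 dj).
      have pi : 0 < (x i - t i - m) * d i by apply: mulr_gt0.
      have pj : 0 < (x j - t j - m) * d j by nra.
      nra.
    + have := et i (lt0r_neq0 di); have := he i Ji; have /andP[_ h2] := hxin i Ji.
      move=> h3 h4; nra.
    + have := et j (ltr0_neq0 dj); have := he j Jj; have /andP[h2 _] := hxin j Jj.
      move=> h3 h4; nra.
    + by [].
apply: ge_ereal_inf; exists (Hs J c x y a m2); first by exists a => //=; rewrite in_itv.
rewrite (HsE _ _ J0 hB) lee_fin; apply: hs_le => // k Jk.
rewrite hhE; have hek := he k Jk; have /andP[h1 h2] := hlohi k Jk.
move: h1 h2; rewrite /lo /hi.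
case: (ltgtP (d k) 0) => dk.
- have := et k (ltr0_neq0 dk) => etk _ h2; nra.
- have := et k (lt0r_neq0 dk) => etk h1 _; nra.
- by rewrite dk mulr0; lra.
Qed.

Lemma L4a {R : realType} {I : Type} {J : set I} {c x y : I -> R} {B : R} :
  J !=set0 -> bnd J c x y B -> forall S,
  (forall i j l, J i -> J j -> 0 <= l <= 1 -> covm c x y i j l <= S) ->
  forall b, exists a, rlo J (fun k => (x k + y k) / 2) <= a <= rhi J (fun k => (x k + y k) / 2)
    /\ hs J c x y (a + b) (a - b) <= S.
Proof.
move=> J0 hB S hS b.
pose u k := (x k + y k) / 2.
pose v k := (x k - y k) / 2.
have huB : forall k, J k -> `|u k| <= B.
  move=> k Jk; have [_ [hx hy]] := hB k Jk.
  have /andP[hx1 hx2] := abs_le hx; have /andP[hy1 hy2] := abs_le hy.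
  rewrite ler_norml /u; apply/andP; split; lra.
have huin : forall k, J k -> rlo J u <= u k <= rhi J u.
  by move=> k Jk; rewrite /rlo /rhi; apply: (mean_in J0 huB).
have LH : rlo J u <= rhi J u.
  by case: J0 => k Jk; have /andP[h1 h2] := huin k Jk; apply: le_trans h1 h2.
pose e k := S - (c k - x k * y k) + (v k - b) ^+ 2.
have he : forall k, J k -> 0 <= e k.
  move=> k Jk; have := hS k k 1 Jk Jk; rewrite cov_self ler01 lexx => /(_ isT) h.
  by rewrite /e; apply: addr_ge0; [rewrite subr_ge0 | exact: sqr_ge0].
pose r k := Num.sqrt (e k).
have r0 : forall k, 0 <= r k by move=> k; exact: sqrtr_ge0.
have r2 : forall k, J k -> r k ^+ 2 = e k by move=> k Jk; rewrite /r sqr_sqrtr // he.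
have hhE : forall k a, hh c x y k (a + b) (a - b) = S - e k + (u k - a) ^+ 2.
  by move=> k a; rewrite /hh /e /u /v; field.
have [a [ha hlohi]] : exists a, rlo J u <= a <= rhi J u /\
    forall k, J k -> u k - r k <= a <= u k + r k.
  apply: helly => //.
  - move=> k Jk; have := r0 k; have /andP[_ h2] := huin k Jk; lra.
  - move=> k Jk; have := r0 k; have /andP[h2 _] := huin k Jk; lra.
  - move=> i j Ji Jj; rewrite leNgt; apply/negP => hlt.
    have ri := r0 i; have rj := r0 j.
    pose m := ((u i - r i) + (u j + r j)) / 2.
    have hmi : r i < u i - m by rewrite /m; lra.
    have hmj : r j < m - u j by rewrite /m; lra.
    pose l := (m - u j) / (u i - u j).
    have hld : l * (u i - u j) = m - u j.
      by rewrite /l divfK // subr_eq0 gt_eqF //; lra.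
    have l0 : 0 < l by nra.
    have l1 : l < 1 by nra.
    have hc := hS i j l Ji Jj (introT andP (conj (ltW l0) (ltW l1))).
    have h := identA c x y i j l (m + b) (m - b).
    have hm : m = l * u i + (1 - l) * u j.
      have -> : l * u i + (1 - l) * u j = l * (u i - u j) + u j by ring.
      by rewrite hld; ring.
    have e0 : ((l * x i + (1 - l) * x j) - (m + b)) * ((l * y i + (1 - l) * y j) - (m - b))
        = - (((l * x i + (1 - l) * x j) - (l * y i + (1 - l) * y j)) / 2 - b) ^+ 2.
      by rewrite hm /u; field.
    rewrite e0 !hhE in h.
    have ei := r2 i Ji; have ej := r2 j Jj.
    have pi : r i ^+ 2 < (u i - m) ^+ 2 by nra.
    have pj : r j ^+ 2 < (u j - m) ^+ 2 by nra.
    have sq := sqr_ge0 (((l * x i + (1 - l) * x j) - (l * y i + (1 - l) * y j)) / 2 - b).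
    nra.
exists a; split => //; apply: hs_le => // k Jk.
rewrite hhE -(r2 k Jk); have := r0 k; have /andP[h1 h2] := hlohi k Jk; nra.
Qed.

Lemma L4 {R : realType} {I : Type} {J : set I} {c x y : I -> R} {B : R} :
  J !=set0 -> bnd J c x y B -> forall S,
  (forall i j l, J i -> J j -> 0 <= l <= 1 -> covm c x y i j l <= S) ->
  (RHSv J c x y <= S%:E)%E.
Proof.
move=> J0 hB S hS; apply: ge_ereal_sup => _ [b _ <-].
have [a [_ ha]] := L4a J0 hB S hS b.
apply: ge_ereal_inf; exists (Hs J c x y (a + b) (a - b)); first by exists a.
by rewrite (HsE _ _ J0 hB) lee_fin.
Qed.

Lemma covm_bnd {R : realType} {I : Type} {J : set I} {c x y : I -> R} {B : R} :
  bnd J c x y B ->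
  forall i j l, J i -> J j -> 0 <= l <= 1 -> covm c x y i j l <= B + B * B.
Proof.
move=> hB i j l Ji Jj hl.
have [hci [hxi hyi]] := hB i Ji; have [hcj [hxj hyj]] := hB j Jj.
have hcm := conv_in (abs_le hci) (abs_le hcj) hl.
have hxm := conv_in (abs_le hxi) (abs_le hxj) hl.
have hym := conv_in (abs_le hyi) (abs_le hyj) hl.
rewrite /covm.
move: hcm hxm hym => /andP[c1 c2] /andP[x1 x2] /andP[y1 y2]; nra.
Qed.

Lemma fin_LR {R : realType} {I : Type} {J : set I} {c x y : I -> R} {B : R} :
  J !=set0 -> bnd J c x y B ->
  LHSv J c x y \is a fin_num /\ RHSv J c x y \is a fin_num.
Proof.
move=> J0 hB; have hb := covm_bnd hB.
have [i0 Ji0] := J0.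
have l01 : (0:R) <= (1:R) <= (1:R) by rewrite ler01 lexx.
split; rewrite fin_numE; apply/andP; split.
- rewrite -ltNye; apply: (lt_le_trans (ltNyr (covm c x y i0 i0 1))); exact: (L1 J0 hB i0 i0 1 Ji0 Ji0 l01).
- rewrite -ltey; apply: (le_lt_trans (L3 J0 hB _ hb)); exact: ltry.
- rewrite -ltNye; apply: (lt_le_trans (ltNyr (covm c x y i0 i0 1))); exact: (L2 J0 hB i0 i0 1 Ji0 Ji0 l01).
- rewrite -ltey; apply: (le_lt_trans (L4 J0 hB _ hb)); exact: ltry.
Qed.

Lemma T1 {R : realType} {I : Type} {J : set I} {c x y : I -> R} {B : R} :
  J !=set0 -> bnd J c x y B -> LHSv J c x y = RHSv J c x y.
Proof.
move=> J0 hB; have [fL fR] := fin_LR J0 hB.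
apply/eqP; rewrite eq_le; apply/andP; split.
  rewrite -(fineK fR); apply: (L3 J0 hB) => i j l Ji Jj hl.
  by rewrite -lee_fin fineK //; exact: (L2 J0 hB i j l Ji Jj hl).
rewrite -(fineK fL); apply: (L4 J0 hB) => i j l Ji Jj hl.
by rewrite -lee_fin fineK //; exact: (L1 J0 hB i j l Ji Jj hl).
Qed.

Definition Phi {R : realType} {I : Type} (J : set I) (c x y : I -> R) (b : R) : \bar R :=
  ereal_inf [set Hs J c x y (a + b) (a - b) | a in [set: R]].

Lemma hh_ab {R : realType} {I : Type} (c x y : I -> R) k a b :
  hh c x y k (a + b) (a - b) =
  (c k - x k * y k) + ((x k + y k) / 2 - a) ^+ 2 - ((x k - y k) / 2 - b) ^+ 2.
Proof. by rewrite /hh; field. Qed.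

Lemma Phi_fin {R : realType} {I : Type} {J : set I} {c x y : I -> R} {B : R} :
  J !=set0 -> bnd J c x y B -> forall b, Phi J c x y b \is a fin_num.
Proof.
move=> J0 hB b; have [i0 Ji0] := J0.
rewrite fin_numE; apply/andP; split.
  rewrite -ltNye.
  apply: (lt_le_trans (ltNyr ((c i0 - x i0 * y i0) - ((x i0 - y i0) / 2 - b) ^+ 2))).
  apply/ereal_infP => _ [a _ <-]; rewrite (HsE _ _ J0 hB) lee_fin.
  apply: le_trans (hs_ub _ _ J0 hB i0 Ji0); rewrite hh_ab.
  have := sqr_ge0 ((x i0 + y i0) / 2 - a); lra.
rewrite -ltey; apply: (le_lt_trans (y := Hs J c x y (0 + b) (0 - b))).
  by apply: ereal_inf_lbound; exists 0.
by rewrite (HsE _ _ J0 hB) ltry.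
Qed.

Lemma phi_lb {R : realType} {I : Type} {J : set I} {c x y : I -> R} {B : R} :
  J !=set0 -> bnd J c x y B -> forall b a,
  fine (Phi J c x y b) <= hs J c x y (a + b) (a - b).
Proof.
move=> J0 hB b a; rewrite -lee_fin fineK ?(Phi_fin J0 hB) // -(HsE _ _ J0 hB).
by apply: ereal_inf_lbound; exists a.
Qed.

Lemma phi_glb {R : realType} {I : Type} {J : set I} {c x y : I -> R} {B : R} :
  J !=set0 -> bnd J c x y B -> forall b M,
  (forall a, M <= hs J c x y (a + b) (a - b)) -> M <= fine (Phi J c x y b).
Proof.
move=> J0 hB b M hM; rewrite -lee_fin fineK ?(Phi_fin J0 hB) //.
by apply/ereal_infP => _ [a _ <-]; rewrite (HsE _ _ J0 hB) lee_fin.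
Qed.

Lemma phi_lip {R : realType} {I : Type} {J : set I} {c x y : I -> R} {B : R} :
  J !=set0 -> bnd J c x y B -> forall b b',
  fine (Phi J c x y b) <= fine (Phi J c x y b') + `|b - b'| * (2 * B + `|b| + `|b'|).
Proof.
move=> J0 hB b b'.
set K := `|b - b'| * (2 * B + `|b| + `|b'|).
rewrite -lerBlDr; apply: (phi_glb J0 hB) => a.
rewrite lerBlDr; apply: le_trans (phi_lb J0 hB b a) _.
apply: hs_le => // k Jk.
apply: le_trans (lerD (hs_ub (a + b') (a - b') J0 hB k Jk) (lexx K)).
rewrite !hh_ab.
have [_ [hx hy]] := hB k Jk.
have /andP[x1 x2] := abs_le hx; have /andP[y1 y2] := abs_le hy.
set v := (x k - y k) / 2.
have v1 : -B <= v <= B by rewrite /v; apply/andP; split; lra.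
have e : ((v - b') ^+ 2 - (v - b) ^+ 2) = (b - b') * (2 * v - b - b') by ring.
suff : (v - b') ^+ 2 - (v - b) ^+ 2 <= K by lra.
rewrite e; apply: le_trans (ler_norm _) _; rewrite normrM /K ler_wpM2l //.
rewrite ler_norml; have := ler_norm b; have := ler_norm b'.
have := ler_norm (- b); have := ler_norm (- b'); rewrite !normrN.
move: v1 => /andP[w1 w2] h1 h2 h3 h4; apply/andP; split; lra.
Qed.

Lemma phi_cont {R : realType} {I : Type} {J : set I} {c x y : I -> R} {B : R} :
  J !=set0 -> bnd J c x y B -> continuous (fun b => fine (Phi J c x y b)).
Proof.
move=> J0 hB b0; apply: (@cont_loc _ _ (2 * B + `|b0|)) => t.
rewrite ler_norml; apply/andP; split.
- have := phi_lip J0 hB b0 t; rewrite distrC.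
  have -> : `|t - b0| * (2 * B + `|b0| + `|t|) = `|t - b0| * (2 * B + `|b0| + `|t|) by [].
  lra.
- have := phi_lip J0 hB t b0.
  have -> : 2 * B + `|t| + `|b0| = 2 * B + `|b0| + `|t| by ring.
  lra.
Qed.

Lemma phi_mono {R : realType} {I : Type} {J : set I} {c x y : I -> R} {B : R} :
  J !=set0 -> bnd J c x y B -> forall t s,
  (forall k, J k -> ((x k - y k) / 2 - s) ^+ 2 <= ((x k - y k) / 2 - t) ^+ 2) ->
  fine (Phi J c x y t) <= fine (Phi J c x y s).
Proof.
move=> J0 hB t s hts; apply: (phi_glb J0 hB) => a.
apply: le_trans (phi_lb J0 hB t a) _.
apply: hs_le => // k Jk; apply: le_trans (hs_ub (a + s) (a - s) J0 hB k Jk).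
rewrite !hh_ab; have := hts k Jk; lra.
Qed.

Lemma T2 {R : realType} {I : Type} {J : set I} {c x y : I -> R} {B : R} :
  J !=set0 -> bnd J c x y B ->
  exists a b, rlo J (fun k => (x k + y k) / 2) <= a <= rhi J (fun k => (x k + y k) / 2)
    /\ rlo J (fun k => (x k - y k) / 2) <= b <= rhi J (fun k => (x k - y k) / 2)
    /\ LHSv J c x y = Hs J c x y (a + b) (a - b).
Proof.
move=> J0 hB.
pose v k := (x k - y k) / 2.
have hvB : forall k, J k -> `|v k| <= B.
  move=> k Jk; have [_ [hx hy]] := hB k Jk.
  have /andP[hx1 hx2] := abs_le hx; have /andP[hy1 hy2] := abs_le hy.
  rewrite ler_norml /v; apply/andP; split; lra.
have hvin : forall k, J k -> rlo J v <= v k <= rhi J v.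
  by move=> k Jk; rewrite /rlo /rhi; apply: (mean_in J0 hvB).
have LH : rlo J v <= rhi J v.
  by case: J0 => k Jk; have /andP[h1 h2] := hvin k Jk; apply: le_trans h1 h2.
have hc : {within `[rlo J v, rhi J v], continuous (fun b => fine (Phi J c x y b))}.
  by apply: continuous_subspaceT; exact: (phi_cont J0 hB).
have [bs hbs hmax] := EVT_max LH hc.
have hall : forall t, fine (Phi J c x y t) <= fine (Phi J c x y bs).
  move=> t; have [tl|tl] := ltP t (rlo J v).
    apply: le_trans (hmax (rlo J v) _); last by rewrite in_itv /= lexx LH.
    apply: (phi_mono J0 hB) => k Jk; have /andP[h1 h2] := hvin k Jk.
    rewrite -/(v k); nra.
  have [th|th] := leP t (rhi J v).
    by apply: hmax; rewrite in_itv /= tl th.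
  apply: le_trans (hmax (rhi J v) _); last by rewrite in_itv /= lexx LH.
  apply: (phi_mono J0 hB) => k Jk; have /andP[h1 h2] := hvin k Jk.
  rewrite -/(v k); nra.
have [fL fR] := fin_LR J0 hB.
have hR : (RHSv J c x y <= (fine (Phi J c x y bs))%:E)%E.
  apply: ge_ereal_sup => _ [t _ <-].
  change (Phi J c x y t <= (fine (Phi J c x y bs))%:E)%E.
  by rewrite -(fineK (Phi_fin J0 hB t)) lee_fin.
have hS : forall i j l, J i -> J j -> 0 <= l <= 1 -> covm c x y i j l <= fine (RHSv J c x y).
  by move=> i j l Ji Jj hl; rewrite -lee_fin fineK //; exact: (L2 J0 hB i j l Ji Jj hl).
have [a [ha has]] := L4a J0 hB _ hS bs.
exists a, bs; split => //; split; first by move: hbs; rewrite in_itv.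
rewrite (T1 J0 hB) (HsE _ _ J0 hB) -(fineK fR); congr (_%:E).
apply/eqP; rewrite eq_le has /=.
rewrite andbT; apply: le_trans (phi_lb J0 hB bs a).
by rewrite -lee_fin fineK.
Qed.

Lemma E_gen6 {d} {T : measurableType d} {R : realType} (P : probability T R)
  (f1 f2 f3 f4 f5 : T -> R) (a0 a1 a2 a3 a4 a5 : R) :
  f1 \in Lfun P 1 -> f2 \in Lfun P 1 -> f3 \in Lfun P 1 -> f4 \in Lfun P 1 -> f5 \in Lfun P 1 ->
  ('E_P[(fun w => a0 + f1 w * a1 + f2 w * a2 + f3 w * a3 + f4 w * a4 + f5 w * a5)%R] =
  (a0 + a1 * fine 'E_P[f1] + a2 * fine 'E_P[f2] + a3 * fine 'E_P[f3]
      + a4 * fine 'E_P[f4] + a5 * fine 'E_P[f5])%:E)%E.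
Proof.
move=> h1 h2 h3 h4 h5.
have s1 : (a1 \o* f1) \in Lfun P 1 by apply: Lfun_scale.
have s2 : (a2 \o* f2) \in Lfun P 1 by apply: Lfun_scale.
have s3 : (a3 \o* f3) \in Lfun P 1 by apply: Lfun_scale.
have s4 : (a4 \o* f4) \in Lfun P 1 by apply: Lfun_scale.
have s5 : (a5 \o* f5) \in Lfun P 1 by apply: Lfun_scale.
have c0 : (cst a0 : T -> R) \in Lfun P 1 by apply: Lfun_cst.
have -> : (fun w => a0 + f1 w * a1 + f2 w * a2 + f3 w * a3 + f4 w * a4 + f5 w * a5) =
  ((((cst a0 \+ a1 \o* f1) \+ a2 \o* f2) \+ a3 \o* f3) \+ a4 \o* f4) \+ a5 \o* f5 by [].
rewrite expectationD ?rpredD // expectationD ?rpredD // expectationD ?rpredD //.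
rewrite expectationD ?rpredD // expectationD //.
rewrite !expectationZl // expectation_cst.
have e1 := esym (fineK (expectation_fin_num h1)).
have e2 := esym (fineK (expectation_fin_num h2)).
have e3 := esym (fineK (expectation_fin_num h3)).
have e4 := esym (fineK (expectation_fin_num h4)).
have e5 := esym (fineK (expectation_fin_num h5)).
move: (fine _) e1 => e1 ->; move: (fine _) e2 => e2 ->; move: (fine _) e3 => e3 ->.
move: (fine _) e4 => e4 ->; move: (fine _) e5 => e5 ->.
by rewrite -!EFinM -!EFinD.
Qed.

Lemma sq_L1 {d} {T : measurableType d} {R : realType} (P : probability T R) (X : T -> R) :
  measurable_fun setT X -> ('E_P[(fun w => X w ^+ 2)%R] < +oo)%E ->
  (fun w => X w ^+ 2) \in Lfun P 1.
Proof.
move=> mX hE; apply/Lfun1_integrable/integrableP; split.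
  by apply/measurable_EFinP; exact: measurable_funX.
move: hE; rewrite unlock => hE.
apply: le_lt_trans hE; rewrite le_eqVlt; apply/orP; left; apply/eqP; apply: eq_integral => w _.
by rewrite /= ger0_norm ?sqr_ge0.
Qed.

Lemma X_L1 {d} {T : measurableType d} {R : realType} (P : probability T R) (X : T -> R) :
  measurable_fun setT X -> ('E_P[(fun w => X w ^+ 2)%R] < +oo)%E -> X \in Lfun P 1.
Proof.
move=> mX hE; have h2 := sq_L1 P X mX hE.
have h1 : (fun w => 1 + X w ^+ 2) \in Lfun P 1.
  have -> : (fun w => 1 + X w ^+ 2) = cst 1 \+ (fun w => X w ^+ 2) by [].
  by rewrite rpredD // Lfun_cst.
apply/Lfun1_integrable; apply: (@le_integrable _ _ _ _ _ measurableT _ (EFin \o (fun w => 1 + X w ^+ 2))).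
- by apply/measurable_EFinP.
- move=> w _; rewrite /= ?abse_EFin lee_fin [X in _ <= X]ger0_norm ?addr_ge0 ?sqr_ge0 //.
  have := sqr_ge0 (`|X w| - 1); have := normr_ge0 (X w); have := real_normK (num_real (X w)); nra.
- exact/Lfun1_integrable.
Qed.

Lemma XY_L1 {d} {T : measurableType d} {R : realType} (P : probability T R) (X Y : T -> R) :
  measurable_fun setT X -> measurable_fun setT Y ->
  ('E_P[(fun w => X w ^+ 2)%R] < +oo)%E -> ('E_P[(fun w => Y w ^+ 2)%R] < +oo)%E ->
  (fun w => X w * Y w) \in Lfun P 1.
Proof.
move=> mX mY hX hY; have h2 := sq_L1 P X mX hX; have h3 := sq_L1 P Y mY hY.
have h1 : (fun w => X w ^+ 2 + Y w ^+ 2) \in Lfun P 1.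
  have -> : (fun w => X w ^+ 2 + Y w ^+ 2) = (fun w => X w ^+ 2) \+ (fun w => Y w ^+ 2) by [].
  by rewrite rpredD.
apply/Lfun1_integrable; apply: (@le_integrable _ _ _ _ _ measurableT _ (EFin \o (fun w => X w ^+ 2 + Y w ^+ 2))).
- by apply/measurable_EFinP; exact: measurable_funM.
- move=> w _; rewrite /= ?abse_EFin lee_fin [X in _ <= X]ger0_norm ?addr_ge0 ?sqr_ge0 // normrM.
  have := sqr_ge0 (`|X w| - `|Y w|).
  have := normr_ge0 (X w); have := real_normK (num_real (X w)).
  have := normr_ge0 (Y w); have := real_normK (num_real (Y w)); nra.
- exact/Lfun1_integrable.
Qed.

Lemma sublin_eq {d} {T : measurableType d} {R : realType} {Ps : set (probability T R)}
  {Z : T -> R} {z : probability T R -> R} :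
  (forall P, Ps P -> 'E_P[Z]%E = (z P)%:E) ->
  sublinE Ps Z = ereal_sup [set (z P)%:E | P in Ps].
Proof. by move=> h; rewrite /sublinE; congr ereal_sup; apply: eq_imagel. Qed.

Theorem lemma3p14 (d : measure_display) (T : measurableType d) (R : realType)
  (Ps : set (probability T R)) (X Y : T -> R) :
  Ps !=set0 ->
  measurable_fun setT X -> measurable_fun setT Y ->
  (sublinE Ps (fun w => (X w ^+ 2)%R) + sublinE Ps (fun w => (Y w ^+ 2)%R) < +oo)%E ->
  let U := fun w => (X w + Y w) / 2 in
  let V := fun w => (X w - Y w) / 2 in
  (upcov Ps X Y =
     ereal_sup [set ereal_inf [set sublinE Ps (fun w => (U w - a) ^+ 2 - (V w - b) ^+ 2)
                              | a in [set: R]]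
               | b in [set: R]]
   /\ exists a b, a \in meanset Ps U /\ b \in meanset Ps V /\
       upcov Ps X Y = sublinE Ps (fun w => (U w - a) ^+ 2 - (V w - b) ^+ 2))
  /\
  (lowcov Ps X Y =
     ereal_inf [set ereal_sup [set (- sublinE Ps (fun w => (- (U w - a) ^+ 2 + (V w - b) ^+ 2)%R))%E
                              | b in [set: R]]
               | a in [set: R]]
   /\ exists a b, a \in meanset Ps U /\ b \in meanset Ps V /\
       lowcov Ps X Y = (- sublinE Ps (fun w => (- (U w - a) ^+ 2 + (V w - b) ^+ 2)%R))%E).
Proof.
move=> Ps0 mX mY hfin U V.
set sX := sublinE Ps (fun w => (X w ^+ 2)%R).
set sY := sublinE Ps (fun w => (Y w ^+ 2)%R).
have {}hfin : (sX + sY < +oo)%E := hfin.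
have hPX : forall P, Ps P -> ('E_P[(fun w => X w ^+ 2)%R] <= sX)%E.
  by move=> P hP; apply: ereal_sup_ubound; exists P.
have hPY : forall P, Ps P -> ('E_P[(fun w => Y w ^+ 2)%R] <= sY)%E.
  by move=> P hP; apply: ereal_sup_ubound; exists P.
have sX0 : (0 <= sX)%E.
  case: Ps0 => P hP; apply: le_trans (hPX P hP); apply: expectation_ge0 => w; exact: sqr_ge0.
have sY0 : (0 <= sY)%E.
  case: Ps0 => P hP; apply: le_trans (hPY P hP); apply: expectation_ge0 => w; exact: sqr_ge0.
have sXf : (sX < +oo)%E.
  rewrite ltNge leye_eq; apply/negP => /eqP e; move: hfin; rewrite e addye ?ltxx //.
  by apply: contraTneq sY0 => ->.
have sYf : (sY < +oo)%E.
  rewrite ltNge leye_eq; apply/negP => /eqP e; move: hfin; rewrite e addey ?ltxx //.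
  by apply: contraTneq sX0 => ->.
have EX2 : forall P, Ps P -> ('E_P[(fun w => X w ^+ 2)%R] < +oo)%E.
  by move=> P hP; apply: le_lt_trans (hPX P hP) sXf.
have EY2 : forall P, Ps P -> ('E_P[(fun w => Y w ^+ 2)%R] < +oo)%E.
  by move=> P hP; apply: le_lt_trans (hPY P hP) sYf.
pose x := fun P : probability T R => fine 'E_P[X]%E.
pose y := fun P : probability T R => fine 'E_P[Y]%E.
pose c := fun P : probability T R => fine 'E_P[(fun w => X w * Y w)%R]%E.
pose qX := fun P : probability T R => fine 'E_P[(fun w => X w ^+ 2)%R]%E.
pose qY := fun P : probability T R => fine 'E_P[(fun w => Y w ^+ 2)%R]%E.
have hE6 : forall P, Ps P -> forall a0 a1 a2 a3 a4 a5,
  'E_P[(fun w => a0 + X w * a1 + Y w * a2 + (X w * Y w) * a3 + X w ^+ 2 * a4 + Y w ^+ 2 * a5)%R]%E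
  = (a0 + a1 * x P + a2 * y P + a3 * c P + a4 * qX P + a5 * qY P)%:E.
  move=> P hP a0 a1 a2 a3 a4 a5.
  exact: (E_gen6 P X Y (fun w => X w * Y w) (fun w => X w ^+ 2) (fun w => Y w ^+ 2) a0 a1 a2 a3 a4 a5 (X_L1 P X mX (EX2 P hP)) (X_L1 P Y mY (EY2 P hP))
     (XY_L1 P X Y mX mY (EX2 P hP) (EY2 P hP)) (sq_L1 P X mX (EX2 P hP)) (sq_L1 P Y mY (EY2 P hP))).
have eE : forall P, Ps P -> forall (F : T -> R) (v a0 a1 a2 a3 a4 a5 : R),
  (forall w, F w = a0 + X w * a1 + Y w * a2 + (X w * Y w) * a3 + X w ^+ 2 * a4 + Y w ^+ 2 * a5) ->
  v = a0 + a1 * x P + a2 * y P + a3 * c P + a4 * qX P + a5 * qY P -> 'E_P[F]%E = v%:E.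
  by move=> P hP F v a0 a1 a2 a3 a4 a5 hF hv; rewrite (funext hF) hE6 // hv.
have e_prod : forall P, Ps P -> forall m1 m2,
    'E_P[(fun w => (X w - m1) * (Y w - m2))%R]%E = (hh c x y P m1 m2)%:E.
  move=> P hP m1 m2; apply: (eE P hP _ _ (m1 * m2) (- m2) (- m1) 1 0 0).
    by move=> w; ring.
  by rewrite /hh; ring.
have e_prodN : forall P, Ps P -> forall m1 m2,
    'E_P[(fun w => - ((X w - m1) * (Y w - m2)))%R]%E
    = (hh (fun P => - c P) (fun P => - x P) y P (- m1) m2)%:E.
  move=> P hP m1 m2; apply: (eE P hP _ _ (- (m1 * m2)) m2 m1 (-1) 0 0).
    by move=> w; ring.
  by rewrite /hh; ring.
have e_lin : forall P, Ps P -> forall a1 a2,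
    'E_P[(fun w => a1 * X w + a2 * Y w)%R]%E = (a1 * x P + a2 * y P)%:E.
  move=> P hP a1 a2; apply: (eE P hP _ _ 0 a1 a2 0 0 0).
    by move=> w; ring.
  by ring.
have e_X : forall P, Ps P -> 'E_P[X]%E = (x P)%:E.
  move=> P hP; have := e_lin P hP 1 0.
  have -> : (fun w => 1 * X w + 0 * Y w) = X by apply/funext => w; ring.
  by move=> ->; congr (_%:E); ring.
have e_NX : forall P, Ps P -> 'E_P[(fun w => - X w)%R]%E = (- x P)%:E.
  move=> P hP; have := e_lin P hP (-1) 0.
  have -> : (fun w => -1 * X w + 0 * Y w) = (fun w => - X w) by apply/funext => w; ring.
  by move=> ->; congr (_%:E); ring.
have e_Y : forall P, Ps P -> 'E_P[Y]%E = (y P)%:E.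
  move=> P hP; have := e_lin P hP 0 1.
  have -> : (fun w => 0 * X w + 1 * Y w) = Y by apply/funext => w; ring.
  by move=> ->; congr (_%:E); ring.
have e_NY : forall P, Ps P -> 'E_P[(fun w => - Y w)%R]%E = (- y P)%:E.
  move=> P hP; have := e_lin P hP 0 (-1).
  have -> : (fun w => 0 * X w + -1 * Y w) = (fun w => - Y w) by apply/funext => w; ring.
  by move=> ->; congr (_%:E); ring.
have e_U : forall P, Ps P -> 'E_P[U]%E = ((x P + y P) / 2)%:E.
  move=> P hP; have := e_lin P hP (2^-1) (2^-1).
  have -> : (fun w => 2^-1 * X w + 2^-1 * Y w) = U by apply/funext => w; rewrite /U; ring.
  by move=> ->; congr (_%:E); ring.
have e_NU : forall P, Ps P -> 'E_P[(fun w => - U w)%R]%E = (- ((x P + y P) / 2))%:E.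
  move=> P hP; have := e_lin P hP (- 2^-1) (- 2^-1).
  have -> : (fun w => - 2^-1 * X w + - 2^-1 * Y w) = (fun w => - U w).
    by apply/funext => w; rewrite /U; ring.
  by move=> ->; congr (_%:E); ring.
have e_V : forall P, Ps P -> 'E_P[V]%E = ((x P - y P) / 2)%:E.
  move=> P hP; have := e_lin P hP (2^-1) (- 2^-1).
  have -> : (fun w => 2^-1 * X w + - 2^-1 * Y w) = V by apply/funext => w; rewrite /V; ring.
  by move=> ->; congr (_%:E); ring.
have e_NV : forall P, Ps P -> 'E_P[(fun w => - V w)%R]%E = (- ((x P - y P) / 2))%:E.
  move=> P hP; have := e_lin P hP (- 2^-1) (2^-1).
  have -> : (fun w => - 2^-1 * X w + 2^-1 * Y w) = (fun w => - V w).
    by apply/funext => w; rewrite /V; ring.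
  by move=> ->; congr (_%:E); ring.
have e_ge0 : forall P, Ps P -> forall (a0 a1 a2 a3 a4 a5 : R),
  (forall w, 0 <= a0 + X w * a1 + Y w * a2 + (X w * Y w) * a3 + X w ^+ 2 * a4 + Y w ^+ 2 * a5) ->
  0 <= a0 + a1 * x P + a2 * y P + a3 * c P + a4 * qX P + a5 * qY P.
  move=> P hP a0 a1 a2 a3 a4 a5 h; rewrite -lee_fin -hE6 //.
  exact: expectation_ge0.
have qX0 : forall P, Ps P -> 0 <= qX P.
  by move=> P hP; apply: fine_ge0; apply: expectation_ge0 => w; exact: sqr_ge0.
have qY0 : forall P, Ps P -> 0 <= qY P.
  by move=> P hP; apply: fine_ge0; apply: expectation_ge0 => w; exact: sqr_ge0.
have sXr : sX = (fine sX)%:E by rewrite fineK // ge0_fin_numE.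
have sYr : sY = (fine sY)%:E by rewrite fineK // ge0_fin_numE.
have qXs : forall P, Ps P -> qX P <= fine sX.
  move=> P hP; rewrite -lee_fin -sXr /qX fineK; first exact: hPX.
  by rewrite ge0_fin_numE ?EX2 //; apply: expectation_ge0 => w; exact: sqr_ge0.
have qYs : forall P, Ps P -> qY P <= fine sY.
  move=> P hP; rewrite -lee_fin -sYr /qY fineK; first exact: hPY.
  by rewrite ge0_fin_numE ?EY2 //; apply: expectation_ge0 => w; exact: sqr_ge0.
pose B := 1 + fine sX + fine sY.
have hB : bnd Ps c x y B.
  move=> P hP; have h1 := qXs P hP; have h2 := qYs P hP.
  have h3 := qX0 P hP; have h4 := qY0 P hP.
  have bx1 := e_ge0 P hP 1 (-1) 0 0 1 0.
  have bx2 := e_ge0 P hP 1 1 0 0 1 0.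
  have by1 := e_ge0 P hP 1 0 (-1) 0 0 1.
  have by2 := e_ge0 P hP 1 0 1 0 0 1.
  have bc1 := e_ge0 P hP 0 0 0 (-1) 1 1.
  have bc2 := e_ge0 P hP 0 0 0 1 1 1.
  have := bx1 (fun w => ltac:(have := sqr_ge0 (X w - 2^-1); nra)).
  have := bx2 (fun w => ltac:(have := sqr_ge0 (X w + 2^-1); nra)).
  have := by1 (fun w => ltac:(have := sqr_ge0 (Y w - 2^-1); nra)).
  have := by2 (fun w => ltac:(have := sqr_ge0 (Y w + 2^-1); nra)).
  have := bc1 (fun w => ltac:(have := sqr_ge0 (X w - Y w); nra)).
  have := bc2 (fun w => ltac:(have := sqr_ge0 (X w + Y w); nra)).
  move=> k1 k2 k3 k4 k5 k6.
  rewrite /B !ler_norml; split; [|split]; apply/andP; split; lra.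
have hmX : meanset Ps X = `[rlo Ps x, rhi Ps x]%classic.
  by rewrite /meanset /lowmean /upmean (sublin_eq e_X) (sublin_eq e_NX).
have hmY : meanset Ps Y = `[rlo Ps y, rhi Ps y]%classic.
  by rewrite /meanset /lowmean /upmean (sublin_eq e_Y) (sublin_eq e_NY).
have hmU : meanset Ps U = `[rlo Ps (fun k => (x k + y k) / 2), rhi Ps (fun k => (x k + y k) / 2)]%classic.
  by rewrite /meanset /lowmean /upmean (sublin_eq e_U) (sublin_eq e_NU).
have hmV : meanset Ps V = `[rlo Ps (fun k => (x k - y k) / 2), rhi Ps (fun k => (x k - y k) / 2)]%classic.
  by rewrite /meanset /lowmean /upmean (sublin_eq e_V) (sublin_eq e_NV).
have hprod : forall m1 m2, sublinE Ps (fun w => (X w - m1) * (Y w - m2)) = Hs Ps c x y m1 m2.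
  by move=> m1 m2; rewrite /Hs; apply: sublin_eq => P hP; exact: e_prod.
have hprodN : forall m1 m2, sublinE Ps (fun w => - ((X w - m1) * (Y w - m2))) =
    Hs Ps (fun P => - c P) (fun P => - x P) y (- m1) m2.
  by move=> m1 m2; rewrite /Hs; apply: sublin_eq => P hP; exact: e_prodN.
have hUV : forall a b, (fun w => (U w - a) ^+ 2 - (V w - b) ^+ 2) =
    (fun w => (X w - (a + b)) * (Y w - (a - b))).
  by move=> a b; apply/funext => w; rewrite /U /V; field.
have hUVN : forall a b, (fun w => - (U w - a) ^+ 2 + (V w - b) ^+ 2) =
    (fun w => - ((X w - (a + b)) * (Y w - (a - b)))).
  by move=> a b; apply/funext => w; rewrite /U /V; field.
have hup : upcov Ps X Y = LHSv Ps c x y.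
  rewrite /upcov /LHSv hmX hmY; congr ereal_sup; apply: eq_imagel => m2 _.
  by congr ereal_inf; apply: eq_imagel => m1 _; rewrite hprod.
have J0 : Ps !=set0 := Ps0.
split.
  split.
    rewrite hup (T1 J0 hB) /RHSv; congr ereal_sup; apply: eq_imagel => b _.
    by congr ereal_inf; apply: eq_imagel => a _; rewrite hUV hprod.
  have [a [b [ha [hb he]]]] := T2 J0 hB.
  exists a, b; rewrite hmU hmV !in_setE /= !in_itv /= ha hb; split => //; split => //.
  by rewrite hup he hUV hprod.
pose c' := fun P => - c P.
pose x' := fun P => - x P.
have hB' : bnd Ps c' x' y B.
  by move=> P hP; have [h1 [h2 h3]] := hB P hP; rewrite /c' /x' !normrN.
have rhiN : forall g : probability T R -> R, rhi Ps (fun k => - g k) = - rlo Ps g.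
  by move=> g; rewrite /rlo /rhi opprK.
have rloN : forall g : probability T R -> R, rlo Ps (fun k => - g k) = - rhi Ps g.
  by move=> g; rewrite /rlo /rhi; congr (- rsup _ _); apply/funext => k; exact: opprK.
have hlow : lowcov Ps X Y = (- LHSv Ps c' x' y)%E.
  rewrite /lowcov /LHSv hmX hmY -ereal_infN image_comp; congr ereal_inf.
  apply: eq_imagel => m2 _ /=; rewrite -ereal_supN image_comp; congr ereal_sup.
  have e1 : rlo Ps x' = - rhi Ps x by exact: rloN.
  have e2 : rhi Ps x' = - rlo Ps x by exact: rhiN.
  apply/seteqP; split => _ [m hm <-].
    exists (- m).
      move: hm; rewrite /= !in_itv /= e1 e2 => /andP[h1 h2]; apply/andP; split; lra.
    by rewrite /= hprodN.
  exists (- m).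
    move: hm; rewrite /= !in_itv /= e1 e2 => /andP[h1 h2]; apply/andP; split; lra.
  by rewrite /= hprodN opprK.
have hin : forall a, ereal_sup [set (- sublinE Ps (fun w => (- (U w - a) ^+ 2 + (V w - b) ^+ 2)%R))%E
                              | b in [set: R]] = (- Phi Ps c' x' y (- a))%E.
  move=> a; rewrite /Phi -ereal_supN; congr ereal_sup.
  apply/seteqP; split => _ [b hb <-].
    exists (Hs Ps c' x' y (- b + - a) (- b - - a)); first by exists (- b).
    by rewrite hUVN hprodN; congr (- Hs _ _ _ _ _ _)%E; ring.
  case: hb => [b' _ <-]; exists (- b') => //.
  by rewrite hUVN hprodN; congr (- Hs _ _ _ _ _ _)%E; ring.
split.
  rewrite hlow (T1 J0 hB') /RHSv -ereal_infN; congr ereal_inf.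
  apply/seteqP; split => _ [z hz <-].
    case: hz => [b' _ <-]; exists (- b') => //; rewrite hin opprK //.
  exists (Phi Ps c' x' y (- z)); first by exists (- z).
  by rewrite hin.
have [a' [b' [ha [hb he]]]] := T2 J0 hB'.
have eu : (fun k => (x' k + y k) / 2) = (fun k => - ((x k - y k) / 2)).
  by apply/funext => k; rewrite /x'; ring.
have ev : (fun k => (x' k - y k) / 2) = (fun k => - ((x k + y k) / 2)).
  by apply/funext => k; rewrite /x'; ring.
rewrite eu rloN rhiN in ha; rewrite ev rloN rhiN in hb.
exists (- b'), (- a'); rewrite hmU hmV !in_setE /= !in_itv /=.
move: ha hb => /andP[ha1 ha2] /andP[hb1 hb2].
split; first by apply/andP; split; lra.
split; first by apply/andP; split; lra.
rewrite hlow he hUVN hprodN; congr (- Hs _ _ _ _ _ _)%E; ring.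
Qed.
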